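(* Let $n\ge 1$. For every $G\in\mathcal{G}_{2n}$ with $F(G)=n-1$ we have $\lfloor n/2\rfloor\le f(G)\le n-1$, and for every integer $m$ with $\lfloor n/2\rfloor\leq m\leq n-1$ there exists $G\in\mathcal{G}_{2n}$ with $F(G)=n-1$ and $f(G)=m$. That is, $\{f(G): G\in\mathcal{G}_{2n},\ F(G)=n-1\}=\{\lfloor n/2\rfloor,\dots,n-1\}$.
   Context: All graphs are finite and simple. $\mathcal{G}_{2n}$ denotes the set of all graphs with $2n$ vertices that have a perfect matching. For a perfect matching $M$ of $G$, a forcing set of $M$ is a subset $S\subseteq M$ contained in no other perfect matching of $G$; $f(G,M)$ is the minimum size of a forcing set of $M$. $f(G)$ and $F(G)$ are the minimum and maximum of $f(G,M)$ over all perfect matchings $M$ of $G$. *)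

(* Defs.v *)
From mathcomp Require Import all_boot.
Set Implicit Arguments. Unset Strict Implicit. Unset Printing Implicit Defensive.

Definition simple_graph (V : finType) (e : rel V) : Prop :=
  (forall x, ~~ e x x) /\ (forall x y, e x y = e y x).

Definition is_pm (V : finType) (e : rel V) (M : {set {set V}}) : bool :=
  [forall A in M, exists u, exists v, [&& u != v, e u v & A == [set u; v]]] &&
  [forall x, #|[set A in M | x \in A]| == 1].

Definition has_pm (V : finType) (e : rel V) : bool := [exists M, is_pm e M].

Definition forcing (V : finType) (e : rel V) (M S : {set {set V}}) : bool :=
  (S \subset M) && [forall M', (is_pm e M' && (S \subset M')) ==> (M' == M)].

(* f(G,M): minimum size of a forcing set of M (M itself is forcing, so the default #|M| is harmless). *)
Definition fGM (V : finType) (e : rel V) (M : {set {set V}}) : nat :=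
  \big[minn/#|M|]_(S | forcing e M S) #|S|.

(* f(G) and F(G): min and max of f(G,M) over perfect matchings M
   (defaults irrelevant when G has a perfect matching). *)
Definition fmin (V : finType) (e : rel V) : nat :=
  \big[minn/#|V|]_(M | is_pm e M) fGM e M.
Definition Fmax (V : finType) (e : rel V) : nat :=
  \max_(M | is_pm e M) fGM e M.

(* Main.v *)
Require Import Defs.
From mathcomp Require Import all_boot.
From mathcomp Require Import zify.
From Stdlib Require Import Classical.
Set Implicit Arguments. Unset Strict Implicit. Unset Printing Implicit Defensive.

Lemma pmP (V : finType) (e : rel V) (M : {set {set V}}) :
  is_pm e M <->
  [/\ (forall A, A \in M -> exists u v, [/\ u != v, e u v & A = [set u; v]]),
      (forall x, exists2 A, A \in M & x \in A) &
      (forall x A B, A \in M -> B \in M -> x \in A -> x \in B -> A = B)].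
Proof.
split.
- move=> /andP [/forallP H1 /forallP H2]; split.
  + move=> A HA; move: (H1 A); rewrite HA /= => /existsP [u /existsP [v /and3P [uv euv /eqP ->]]].
    by exists u, v.
  + move=> x; have /cards1P [A hA] := H2 x.
    have : A \in [set A0 in M | x \in A0] by rewrite hA set11.
    by rewrite inE => /andP [h1 h2]; exists A.
  + move=> x A B HA HB xA xB; have /cards1P [C hC] := H2 x.
    have : A \in [set A0 in M | x \in A0] by rewrite inE HA xA.
    have : B \in [set A0 in M | x \in A0] by rewrite inE HB xB.
    by rewrite hC !inE => /eqP -> /eqP ->.
- move=> [H1 H2 H3]; apply/andP; split; apply/forallP.
  + move=> A; apply/implyP => HA; have [u [v [uv euv ->]]] := H1 A HA.
    by apply/existsP; exists u; apply/existsP; exists v; rewrite uv euv eqxx.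
  + move=> x; apply/cards1P; have [A HA xA] := H2 x; exists A.
    apply/setP => B; rewrite !inE; apply/andP/eqP.
    * by move=> [HB xB]; apply: (H3 x).
    * by move=> ->.
Qed.

Lemma pm_edge (V : finType) (e : rel V) (M : {set {set V}}) A : is_pm e M -> A \in M -> exists u v, [/\ u != v, e u v & A = [set u; v]].
Proof. by move=> /pmP [H _ _]; apply: H. Qed.
Lemma pm_cover (V : finType) (e : rel V) (M : {set {set V}}) (x : V) : is_pm e M -> exists2 A, A \in M & x \in A.
Proof. by move=> /pmP [_ H _]; apply: H. Qed.
Lemma pm_uniq (V : finType) (e : rel V) (M : {set {set V}}) (x : V) A B : is_pm e M -> A \in M -> B \in M -> x \in A -> x \in B -> A = B.
Proof. by move=> /pmP [_ _ H]; apply: H. Qed.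

Lemma pm_partner (V : finType) (e : rel V) (M : {set {set V}}) (x : V) : is_pm e M -> exists y, [set x; y] \in M.
Proof.
move=> pm; have [A HA xA] := pm_cover x pm; have [u [v [uv euv EA]]] := pm_edge pm HA.
move: xA; rewrite EA !inE => /orP [] /eqP ->; first by exists v; rewrite -EA.
by exists u; rewrite setUC -EA.
Qed.

Lemma pm_neq (V : finType) (e : rel V) (M : {set {set V}}) (x y : V) : is_pm e M -> [set x; y] \in M -> x != y.
Proof.
move=> pm H; have [u [v [uv euv E]]] := pm_edge pm H; apply/eqP => xy; subst y.
have : #|[set x; x]| = #|[set u; v]| by rewrite E.
by rewrite !cards2 eqxx uv.
Qed.

Lemma pm_adj (V : finType) (e : rel V) (M : {set {set V}}) (x y : V) : (forall a b, e a b = e b a) -> is_pm e M -> [set x; y] \in M -> e x y.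
Proof.
move=> sym pm H; have [u [v [uv euv E]]] := pm_edge pm H.
have xu : x \in [set u; v] by rewrite -E !inE eqxx.
have yu : y \in [set u; v] by rewrite -E !inE eqxx orbT.
have xy := pm_neq pm H.
move: xu yu xy; rewrite !inE => /orP [] /eqP -> /orP [] /eqP ->; rewrite ?eqxx //= => _.
by rewrite sym.
Qed.

Lemma pm_partner_uniq (V : finType) (e : rel V) (M : {set {set V}}) (x y z : V) : is_pm e M -> [set x; y] \in M -> [set x; z] \in M -> y = z.
Proof.
move=> pm H1 H2; have E := pm_uniq (x := x) pm H1 H2 (setU11 _ _) (setU11 _ _).
have : y \in [set x; z] by rewrite -E !inE eqxx orbT.
rewrite !inE => /orP [] /eqP // yx; subst y.
by move: (pm_neq pm H1); rewrite eqxx.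
Qed.

Lemma pm_in_neq (V : finType) (e : rel V) (M : {set {set V}}) (x y : V) A B : is_pm e M -> A \in M -> B \in M -> A != B ->
  x \in A -> y \in B -> x != y.
Proof.
move=> pm HA HB AB xA yB; apply/eqP => xy; subst y.
by move: AB; rewrite (pm_uniq pm HA HB xA yB) eqxx.
Qed.

Lemma pm_sub_eq (V : finType) (e : rel V) (M M' : {set {set V}}) : is_pm e M -> is_pm e M' -> M \subset M' -> M = M'.
Proof.
move=> pm pm' sub; apply/eqP; rewrite eqEsubset sub /=; apply/subsetP => F HF.
have [u [v [uv euv EF]]] := pm_edge pm' HF.
have [C HC uC] := pm_cover u pm.
have -> : F = C by apply: (pm_uniq (x := u) pm' HF (subsetP sub _ HC)) => //; rewrite EF setU11.
exact HC.
Qed.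

Lemma disjP (V : finType) (A B : {set V}) : reflect (forall x, x \in A -> x \in B -> False) [disjoint A & B].
Proof.
rewrite disjoints_subset; apply: (iffP subsetP) => H x xA.
- by move=> xB; move: (H x xA); rewrite inE xB.
- by rewrite inE; apply/negP => xB; apply: (H x).
Qed.

Lemma pairwise_disj_uniq (V : finType) (as_ : seq {set V}) x A B :
  pairwise (fun A B : {set V} => [disjoint A & B]) as_ -> A \in as_ -> B \in as_ -> x \in A -> x \in B -> A = B.
Proof.
elim: as_ => // a s IH /= => /andP [/allP Ha Hs].
rewrite !inE => /orP [/eqP ->|HA] /orP [/eqP ->|HB] xA xB //.
- by move: (Ha _ HB) => /disjP /(_ x xA xB).
- by move: (Ha _ HA) => /disjP /(_ x xB xA).
- exact: IH.
Qed.

Lemma has_ex (V : finType) (s : seq {set V}) x :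
  (exists2 A, A \in [set X : {set V} | X \in s] & x \in A) <-> has (fun A : {set V} => x \in A) s.
Proof.
split.
- by move=> [A]; rewrite inE => HA xA; apply/hasP; exists A.
- by move/hasP => [A HA xA]; exists A; rewrite ?inE.
Qed.

Lemma pm_swap (V : finType) (e : rel V) (N : {set {set V}}) (rs as_ : seq {set V}) :
  is_pm e N -> all (fun A : {set V} => A \in N) rs ->
  (forall A, A \in as_ -> exists u v, [/\ u != v, e u v & A = [set u; v]]) ->
  (forall x, has (fun A : {set V} => x \in A) rs = has (fun A : {set V} => x \in A) as_) ->
  pairwise (fun A B : {set V} => [disjoint A & B]) as_ ->
  is_pm e ((N :\: [set X : {set V} | X \in rs]) :|: [set X : {set V} | X \in as_]).
Proof.
move=> pm /allP rN Hedge Hcov Hdisj; apply/pmP; split.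
- move=> A; rewrite !inE => /orP [/andP [_ HA]|HA]; first exact: pm_edge pm HA.
  exact: Hedge.
- move=> x; have [B HB xB] := pm_cover x pm.
  case: (boolP (B \in rs)) => Brs.
  + have : has (fun A : {set V} => x \in A) rs by apply/hasP; exists B.
    rewrite Hcov => /hasP [A HA xA]; by exists A; rewrite // !inE HA orbT.
  + by exists B; rewrite // !inE Brs HB.
- move=> x A B; rewrite !inE => /orP [/andP [Ar HA]|HA] /orP [/andP [Br HB]|HB] xA xB.
  + exact: pm_uniq pm HA HB xA xB.
  + exfalso; have : has (fun A : {set V} => x \in A) as_ by apply/hasP; exists B.
    rewrite -Hcov => /hasP [C HC xC].
    have := pm_uniq pm HA (rN _ HC) xA xC; move=> E; subst C; by rewrite HC in Ar.
  + exfalso; have : has (fun A : {set V} => x \in A) as_ by apply/hasP; exists A.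
    rewrite -Hcov => /hasP [C HC xC].
    have := pm_uniq pm HB (rN _ HC) xB xC; move=> E; subst C; by rewrite HC in Br.
  + exact: pairwise_disj_uniq Hdisj HA HB xA xB.
Qed.

Definition notforced (V : finType) (e : rel V) (N S : {set {set V}}) :=
  exists N', [/\ is_pm e N', S \subset N' & N' != N].

Lemma forcing_nf (V : finType) (e : rel V) (N S : {set {set V}}) :
  forcing e N S -> notforced e N S -> False.
Proof.
move=> /andP [_ /forallP H] [N' [pm sub neq]].
by move: (H N'); rewrite pm sub /= (negbTE neq).
Qed.

Lemma alt_gen (V : finType) (e : rel V) (N S : {set {set V}}) (rs as_ : seq {set V}) F :
  is_pm e N -> S \subset N -> all (fun A : {set V} => A \in N) rs ->
  (forall A, A \in as_ -> exists u v, [/\ u != v, e u v & A = [set u; v]]) ->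
  (forall x, has (fun A : {set V} => x \in A) rs = has (fun A : {set V} => x \in A) as_) ->
  pairwise (fun A B : {set V} => [disjoint A & B]) as_ ->
  all (fun A : {set V} => A \notin S) rs -> F \in as_ -> F \notin N ->
  notforced e N S.
Proof.
move=> pm SN rN Hedge Hcov Hdisj /allP rS HF FN.
exists ((N :\: [set X : {set V} | X \in rs]) :|: [set X : {set V} | X \in as_]); split.
- exact: pm_swap.
- apply/subsetP => A AS; rewrite !inE (subsetP SN _ AS) andbT.
  case: (boolP (A \in rs)) => //= Ar; by move: (rS _ Ar); rewrite AS.
- apply/eqP => E; move: FN; rewrite -E !inE HF orbT //.
Qed.

Lemma disj2 (V : finType) (a b c d : V) :
  a != c -> a != d -> b != c -> b != d -> [disjoint [set a; b] & [set c; d]].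
Proof.
move=> ac ad bc bd; apply/disjP => x; rewrite !inE => /orP [] /eqP -> /orP [] /eqP E.
- by move: ac; rewrite E eqxx.
- by move: ad; rewrite E eqxx.
- by move: bc; rewrite E eqxx.
- by move: bd; rewrite E eqxx.
Qed.

Lemma notin_pm (V : finType) (e : rel V) (N : {set {set V}}) (a b c : V) :
  is_pm e N -> [set a; b] \in N -> c != a -> c != b -> [set b; c] \notin N.
Proof.
move=> pm H ca cb; apply/negP => H2.
have E := pm_uniq (x := b) pm H H2 (setU1r _ (set11 _)) (setU11 _ _).
have : c \in [set a; b] by rewrite E !inE eqxx orbT.
by rewrite !inE (negbTE ca) (negbTE cb).
Qed.

Ltac dist pm :=
  match goal with |- is_true (negb _) =>
  first [ by apply: (pm_neq pm); assumption
        | by rewrite eq_sym; apply: (pm_neq pm); assumption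
        | match goal with HA : is_true (in_mem ?A ?P), HB : is_true (in_mem ?B ?P), H : is_true (negb ?C) |- _ =>
            first [ by apply: (pm_in_neq pm HA HB H); rewrite !inE eqxx ?orbT
                  | by rewrite eq_sym; apply: (pm_in_neq pm HA HB H); rewrite !inE eqxx ?orbT ] end ]
  end.

Lemma alt2 (V : finType) (e : rel V) (N S : {set {set V}}) (x1 x2 x3 x4 : V) :
  is_pm e N -> S \subset N ->
  [set x1; x2] \in N -> [set x3; x4] \in N -> [set x1; x2] != [set x3; x4] ->
  e x2 x3 -> e x4 x1 -> [set x1; x2] \notin S -> [set x3; x4] \notin S -> notforced e N S.
Proof.
move=> pm SN H1 H2 N12 e23 e41 S1 S2.
apply: (alt_gen (rs := [:: [set x1; x2]; [set x3; x4]]) (as_ := [:: [set x2; x3]; [set x4; x1]])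
  (F := [set x2; x3]) pm SN).
- by rewrite /= H1 H2.
- move=> A; rewrite !inE ?orbF => /orP [] /eqP ->.
  + by exists x2, x3; split => //; dist pm.
  + by exists x4, x1; split => //; dist pm.
- by move=> x /=; rewrite !inE; case: (x == x1); case: (x == x2); case: (x == x3); case: (x == x4).
- by rewrite /= !andbT; apply: disj2; dist pm.
- by rewrite /= S1 S2.
- by rewrite inE eqxx.
- by apply: (notin_pm pm H1); dist pm.
Qed.

Lemma alt3 (V : finType) (e : rel V) (N S : {set {set V}}) (x1 x2 x3 x4 x5 x6 : V) :
  is_pm e N -> S \subset N ->
  [set x1; x2] \in N -> [set x3; x4] \in N -> [set x5; x6] \in N ->
  [set x1; x2] != [set x3; x4] -> [set x1; x2] != [set x5; x6] -> [set x3; x4] != [set x5; x6] ->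
  e x2 x3 -> e x4 x5 -> e x6 x1 ->
  [set x1; x2] \notin S -> [set x3; x4] \notin S -> [set x5; x6] \notin S -> notforced e N S.
Proof.
move=> pm SN H1 H2 H3 N12 N13 N23 e23 e45 e61 S1 S2 S3.
apply: (alt_gen (rs := [:: [set x1; x2]; [set x3; x4]; [set x5; x6]])
  (as_ := [:: [set x2; x3]; [set x4; x5]; [set x6; x1]]) (F := [set x2; x3]) pm SN).
- by rewrite /= H1 H2 H3.
- move=> A; rewrite !inE ?orbF => /orP [/eqP ->|/orP [] /eqP ->].
  + by exists x2, x3; split => //; dist pm.
  + by exists x4, x5; split => //; dist pm.
  + by exists x6, x1; split => //; dist pm.
- by move=> x /=; rewrite !inE; case: (x == x1); case: (x == x2); case: (x == x3);
     case: (x == x4); case: (x == x5); case: (x == x6).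
- by rewrite /= !andbT; repeat (apply/andP; split); apply: disj2; dist pm.
- by rewrite /= S1 S2 S3.
- by rewrite inE eqxx.
- by apply: (notin_pm pm H1); dist pm.
Qed.

Lemma alt4 (V : finType) (e : rel V) (N S : {set {set V}}) (x1 x2 x3 x4 x5 x6 x7 x8 : V) :
  is_pm e N -> S \subset N ->
  [set x1; x2] \in N -> [set x3; x4] \in N -> [set x5; x6] \in N -> [set x7; x8] \in N ->
  [set x1; x2] != [set x3; x4] -> [set x1; x2] != [set x5; x6] -> [set x1; x2] != [set x7; x8] ->
  [set x3; x4] != [set x5; x6] -> [set x3; x4] != [set x7; x8] -> [set x5; x6] != [set x7; x8] ->
  e x2 x3 -> e x4 x5 -> e x6 x7 -> e x8 x1 ->
  [set x1; x2] \notin S -> [set x3; x4] \notin S -> [set x5; x6] \notin S -> [set x7; x8] \notin S ->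
  notforced e N S.
Proof.
move=> pm SN H1 H2 H3 H4 N12 N13 N14 N23 N24 N34 e23 e45 e67 e81 S1 S2 S3 S4.
apply: (alt_gen (rs := [:: [set x1; x2]; [set x3; x4]; [set x5; x6]; [set x7; x8]])
  (as_ := [:: [set x2; x3]; [set x4; x5]; [set x6; x7]; [set x8; x1]]) (F := [set x2; x3]) pm SN).
- by rewrite /= H1 H2 H3 H4.
- move=> A; rewrite !inE ?orbF => /orP [/eqP ->|/orP [/eqP ->|/orP [] /eqP ->]].
  + by exists x2, x3; split => //; dist pm.
  + by exists x4, x5; split => //; dist pm.
  + by exists x6, x7; split => //; dist pm.
  + by exists x8, x1; split => //; dist pm.
- by move=> x /=; rewrite !inE; case: (x == x1); case: (x == x2); case: (x == x3);
     case: (x == x4); case: (x == x5); case: (x == x6); case: (x == x7); case: (x == x8).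
- by rewrite /= !andbT; repeat (apply/andP; split); apply: disj2; dist pm.
- by rewrite /= S1 S2 S3 S4.
- by rewrite inE eqxx.
- by apply: (notin_pm pm H1); dist pm.
Qed.

Lemma set2_neq1 (V : finType) (x1 x2 x3 x4 : V) : x1 != x3 -> x1 != x4 -> [set x1; x2] != [set x3; x4].
Proof. move=> h1 h2; apply/eqP => E; have : x1 \in [set x3; x4] by rewrite -E !inE eqxx. by rewrite !inE (negbTE h1) (negbTE h2). Qed.
Lemma set2_neq2 (V : finType) (x1 x2 x3 x4 : V) : x2 != x3 -> x2 != x4 -> [set x1; x2] != [set x3; x4].
Proof. by move=> h1 h2; rewrite setUC; apply: set2_neq1. Qed.
Lemma set2_neq3 (V : finType) (x1 x2 x3 x4 : V) : x3 != x1 -> x3 != x2 -> [set x1; x2] != [set x3; x4].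
Proof. by move=> h1 h2; rewrite eq_sym; apply: set2_neq1. Qed.
Lemma set2_neq4 (V : finType) (x1 x2 x3 x4 : V) : x4 != x1 -> x4 != x2 -> [set x1; x2] != [set x3; x4].
Proof. by move=> h1 h2; rewrite eq_sym; apply: set2_neq2. Qed.

Lemma nS1 (V : finType) (S : {set {set V}}) (x y : V) : (forall A, A \in S -> x \notin A) -> [set x; y] \notin S.
Proof. by move=> h; apply/negP => /h; rewrite !inE eqxx. Qed.
Lemma nS2 (V : finType) (S : {set {set V}}) (x y : V) : (forall A, A \in S -> x \notin A) -> [set y; x] \notin S.
Proof. by move=> h; rewrite setUC; apply: nS1. Qed.

Lemma pinj (V : finType) (e : rel V) (N : {set {set V}}) (x y px py : V) :
  is_pm e N -> [set x; px] \in N -> [set y; py] \in N -> x != y -> px != py.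
Proof.
move=> pm Hx Hy xy; apply/eqP => E; subst py.
have E2 := pm_uniq (x := px) pm Hx Hy (setU1r _ (set11 _)) (setU1r _ (set11 _)).
have : x \in [set y; px] by rewrite -E2 !inE eqxx.
rewrite !inE (negbTE xy) /= => /eqP E3; subst px.
by move: (pm_neq pm Hx); rewrite eqxx.
Qed.

Lemma pn (V : finType) (e : rel V) (N : {set {set V}}) (x y px py : V) :
  is_pm e N -> [set x; px] \in N -> [set y; py] \in N -> px != y -> py != x.
Proof.
move=> pm Hx Hy h; apply/eqP => E; subst py.
have : px = y by apply: (pm_partner_uniq pm Hx); rewrite setUC.
by move/eqP; rewrite (negbTE h).
Qed.

Ltac vn := first [assumption | rewrite eq_sym; assumption].
Ltac fin sym := first [ assumption | by rewrite setUC | by rewrite sym | by [] |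
   by apply: nS1; assumption | by apply: nS2; assumption |
   by apply: set2_neq1; vn | by apply: set2_neq2; vn | by apply: set2_neq3; vn | by apply: set2_neq4; vn ].

Lemma SL (V : finType) (e : rel V) (N S : {set {set V}}) (a b c d : V) :
  (forall x y, e x y = e y x) -> is_pm e N -> S \subset N ->
  (forall A, A \in S -> a \notin A) -> (forall A, A \in S -> b \notin A) ->
  (forall A, A \in S -> c \notin A) -> (forall A, A \in S -> d \notin A) ->
  a != b -> a != c -> a != d -> b != c -> b != d -> c != d ->
  e a b -> e c d -> e a c -> e b d ->
  (forall z, z != a -> z != b -> z != c -> z != d -> (e z a || e z b) && (e z c || e z d)) ->
  notforced e N S.
Proof.
move=> sym pm SN hSa hSb hSc hSd ab ac ad bc bd cd eab ecd eac ebd hz.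
have ba0 : b != a by rewrite eq_sym. have ca0 : c != a by rewrite eq_sym. have da0 : d != a by rewrite eq_sym.
have cb0 : c != b by rewrite eq_sym. have db0 : d != b by rewrite eq_sym. have dc0 : d != c by rewrite eq_sym.
have [pa Ha] := pm_partner a pm. have [pb Hb] := pm_partner b pm.
have [pc Hc] := pm_partner c pm. have [pd Hd] := pm_partner d pm.
have apa := pm_neq pm Ha. have bpb := pm_neq pm Hb. have cpc := pm_neq pm Hc. have dpd := pm_neq pm Hd.
have papb := pinj pm Ha Hb ab. have papc := pinj pm Ha Hc ac. have papd := pinj pm Ha Hd ad.
have pbpc := pinj pm Hb Hc bc. have pbpd := pinj pm Hb Hd bd. have pcpd := pinj pm Hc Hd cd.
have [Eab|nab] := eqVneq pa b.
{ subst pa. have Eba : pb = a by apply: (pm_partner_uniq pm Hb); rewrite setUC.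
  subst pb.
  have [Ecd|ncd] := eqVneq pc d.
  { subst pc. apply: (alt2 (x1:=a) (x2:=b) (x3:=d) (x4:=c) pm SN); fin sym. }
  have ca : pc != a := pn pm Ha Hc bc.
  have cb : pc != b := pn pm Hb Hc ac.
  have dc : pd != c := pn pm Hc Hd ncd.
  have da : pd != a := pn pm Ha Hd bd.
  have db : pd != b := pn pm Hb Hd ad.
  have cc : pc != c by rewrite eq_sym.
  have dd : pd != d by rewrite eq_sym.
  have /andP [z1 _] := hz pc ca cb cc ncd.
  have /andP [z2 _] := hz pd da db dc dd.
  case: (boolP (e pd a)) => [h1|h1].
  { by apply: (alt2 (x1:=a) (x2:=b) (x3:=d) (x4:=pd) pm SN); fin sym. }
  case: (boolP (e pc b)) => [h2|h2].
  { by apply: (alt2 (x1:=b) (x2:=a) (x3:=c) (x4:=pc) pm SN); fin sym. }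
  rewrite (negbTE h2) orbF in z1. rewrite (negbTE h1) /= in z2.
  by apply: (alt3 (x1:=a) (x2:=b) (x3:=pd) (x4:=d) (x5:=c) (x6:=pc) pm SN); fin sym. }
have [Eac|nac] := eqVneq pa c.
{ subst pa. have Eca : pc = a by apply: (pm_partner_uniq pm Hc); rewrite setUC.
  subst pc.
  have [Ebd|nbd] := eqVneq pb d.
  { subst pb. by apply: (alt2 (x1:=a) (x2:=c) (x3:=d) (x4:=b) pm SN); fin sym. }
  have ba : pb != a := pn pm Ha Hb cb0.
  have bc' : pb != c := pn pm Hc Hb ab.
  have bb : pb != b by rewrite eq_sym.
  have da : pd != a := pn pm Ha Hd cd.
  have dc : pd != c := pn pm Hc Hd ad.
  have db : pd != b := pn pm Hb Hd nbd.
  have dd : pd != d by rewrite eq_sym.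
  have /andP [_ z1] := hz pb ba bb bc' nbd.
  have /andP [z2 _] := hz pd da db dc dd.
  case: (boolP (e c pb)) => [h1|h1].
  { by apply: (alt2 (x1:=a) (x2:=c) (x3:=pb) (x4:=b) pm SN); fin sym. }
  case: (boolP (e a pd)) => [h2|h2].
  { by apply: (alt2 (x1:=c) (x2:=a) (x3:=pd) (x4:=d) pm SN); fin sym. }
  rewrite sym (negbTE h1) /= in z1. rewrite sym (negbTE h2) /= in z2.
  by apply: (alt2 (x1:=b) (x2:=pb) (x3:=d) (x4:=pd) pm SN); fin sym. }
have [Ead|nad] := eqVneq pa d.
{ subst pa. have Eda : pd = a by apply: (pm_partner_uniq pm Hd); rewrite setUC.
  subst pd.
  have [Ebc|nbc] := eqVneq pb c.
  { subst pb. by apply: (alt2 (x1:=a) (x2:=d) (x3:=c) (x4:=b) pm SN); fin sym. }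
  have ba : pb != a := pn pm Ha Hb db0.
  have bd' : pb != d := pn pm Hd Hb ab.
  have bb : pb != b by rewrite eq_sym.
  have ca : pc != a := pn pm Ha Hc dc0.
  have cd' : pc != d := pn pm Hd Hc ac.
  have cb : pc != b := pn pm Hb Hc nbc.
  have cc : pc != c by rewrite eq_sym.
  have /andP [_ z1] := hz pb ba bb nbc bd'.
  have /andP [z2 _] := hz pc ca cb cc cd'.
  case: (boolP (e d pc)) => [h1|h1].
  { by apply: (alt2 (x1:=a) (x2:=d) (x3:=pc) (x4:=c) pm SN); fin sym. }
  case: (boolP (e a pb)) => [h2|h2].
  { by apply: (alt2 (x1:=d) (x2:=a) (x3:=pb) (x4:=b) pm SN); fin sym. }
  case: (boolP (e a pc)) => [h3|h3].
  { by apply: (alt2 (x1:=d) (x2:=a) (x3:=pc) (x4:=c) pm SN); fin sym. }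
  rewrite sym (negbTE h3) /= in z2.
  case: (boolP (e pb c)) => [h4|h4].
  { by apply: (alt2 (x1:=b) (x2:=pb) (x3:=c) (x4:=pc) pm SN); fin sym. }
  rewrite (negbTE h4) /= in z1.
  by apply: (alt3 (x1:=a) (x2:=d) (x3:=pb) (x4:=b) (x5:=pc) (x6:=c) pm SN); fin sym. }
have ab' : pa != b := nab. have ac' : pa != c := nac. have ad' : pa != d := nad.
have aa : pa != a by rewrite eq_sym.
have ba : pb != a := pn pm Ha Hb nab.
have ca : pc != a := pn pm Ha Hc nac.
have da : pd != a := pn pm Ha Hd nad.
have /andP [_ za] := hz pa aa nab nac nad.
have [Ebc|nbc] := eqVneq pb c.
{ subst pb. have Ecb : pc = b by apply: (pm_partner_uniq pm Hc); rewrite setUC.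
  subst pc.
  have db' : pd != b := pn pm Hb Hd cd.
  have dc' : pd != c := pn pm Hc Hd bd.
  have dd : pd != d by rewrite eq_sym.
  have /andP [zd1 _] := hz pd da db' dc' dd.
  case: (boolP (e c pd)) => [h1|h1].
  { by apply: (alt2 (x1:=b) (x2:=c) (x3:=pd) (x4:=d) pm SN); fin sym. }
  case: (boolP (e b pa)) => [h2|h2].
  { by apply: (alt2 (x1:=c) (x2:=b) (x3:=pa) (x4:=a) pm SN); fin sym. }
  case: (boolP (e b pd)) => [h3|h3].
  { by apply: (alt2 (x1:=c) (x2:=b) (x3:=pd) (x4:=d) pm SN); fin sym. }
  rewrite [e pd b]sym (negbTE h3) orbF in zd1.
  case: (boolP (e pa d)) => [h4|h4].
  { by apply: (alt2 (x1:=a) (x2:=pa) (x3:=d) (x4:=pd) pm SN); fin sym. }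
  rewrite (negbTE h4) orbF in za.
  by apply: (alt3 (x1:=b) (x2:=c) (x3:=pa) (x4:=a) (x5:=pd) (x6:=d) pm SN); fin sym. }
have [Ebd|nbd] := eqVneq pb d.
{ subst pb. have Edb : pd = b by apply: (pm_partner_uniq pm Hd); rewrite setUC.
  subst pd.
  have cb' : pc != b := pn pm Hb Hc dc0.
  have cd' : pc != d := pn pm Hd Hc bc.
  have cc : pc != c by rewrite eq_sym.
  have /andP [zc1 _] := hz pc ca cb' cc cd'.
  case: (boolP (e d pa)) => [h1|h1].
  { by apply: (alt2 (x1:=b) (x2:=d) (x3:=pa) (x4:=a) pm SN); fin sym. }
  case: (boolP (e b pc)) => [h2|h2].
  { by apply: (alt2 (x1:=d) (x2:=b) (x3:=pc) (x4:=c) pm SN); fin sym. }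
  rewrite [e pa d]sym (negbTE h1) orbF in za.
  rewrite [e pc b]sym (negbTE h2) orbF in zc1.
  by apply: (alt2 (x1:=a) (x2:=pa) (x3:=c) (x4:=pc) pm SN); fin sym. }
have bb : pb != b by rewrite eq_sym.
have /andP [_ zb] := hz pb ba bb nbc nbd.
have [Ecd|ncd] := eqVneq pc d.
{ subst pc. have Edc : pd = c by apply: (pm_partner_uniq pm Hd); rewrite setUC.
  subst pd.
  case: (boolP (e pb c)) => [h1|h1].
  { by apply: (alt2 (x1:=c) (x2:=d) (x3:=b) (x4:=pb) pm SN); fin sym. }
  case: (boolP (e pa d)) => [h2|h2].
  { by apply: (alt2 (x1:=d) (x2:=c) (x3:=a) (x4:=pa) pm SN); fin sym. }
  rewrite (negbTE h1) /= in zb. rewrite (negbTE h2) orbF in za.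
  by apply: (alt3 (x1:=c) (x2:=d) (x3:=pb) (x4:=b) (x5:=a) (x6:=pa) pm SN); fin sym. }
have cb' : pc != b := pn pm Hb Hc nbc.
have cc : pc != c by rewrite eq_sym.
have db' : pd != b := pn pm Hb Hd nbd.
have dc' : pd != c := pn pm Hc Hd ncd.
have dd : pd != d by rewrite eq_sym.
have /andP [zc _] := hz pc ca cb' cc ncd.
have /andP [zd _] := hz pd da db' dc' dd.
case: (boolP (e pa c)) => [h1|h1].
{ case: (boolP (e pc a)) => [h2|h2].
  { by apply: (alt2 (x1:=a) (x2:=pa) (x3:=c) (x4:=pc) pm SN); fin sym. }
  rewrite (negbTE h2) /= in zc.
  case: (boolP (e pb c)) => [h3|h3].
  { by apply: (alt2 (x1:=b) (x2:=pb) (x3:=c) (x4:=pc) pm SN); fin sym. }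
  rewrite (negbTE h3) /= in zb.
  case: (boolP (e pd b)) => [h4|h4].
  { by apply: (alt2 (x1:=b) (x2:=pb) (x3:=d) (x4:=pd) pm SN); fin sym. }
  rewrite (negbTE h4) orbF in zd.
  by apply: (alt4 (x1:=a) (x2:=pa) (x3:=c) (x4:=pc) (x5:=b) (x6:=pb) (x7:=d) (x8:=pd) pm SN); fin sym. }
rewrite (negbTE h1) /= in za.
case: (boolP (e pd a)) => [h2|h2].
{ by apply: (alt2 (x1:=a) (x2:=pa) (x3:=d) (x4:=pd) pm SN); fin sym. }
rewrite (negbTE h2) /= in zd.
case: (boolP (e pb d)) => [h3|h3].
{ by apply: (alt2 (x1:=b) (x2:=pb) (x3:=d) (x4:=pd) pm SN); fin sym. }
rewrite (negbTE h3) orbF in zb.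
case: (boolP (e pc b)) => [h4|h4].
{ by apply: (alt2 (x1:=b) (x2:=pb) (x3:=c) (x4:=pc) pm SN); fin sym. }
rewrite (negbTE h4) orbF in zc.
by apply: (alt4 (x1:=a) (x2:=pa) (x3:=d) (x4:=pd) (x5:=b) (x6:=pb) (x7:=c) (x8:=pc) pm SN); fin sym.
Qed.

Lemma bigmin_le (I : finType) (P : pred I) (F : I -> nat) x0 j :
  P j -> \big[minn/x0]_(i | P i) F i <= F j.
Proof.
move=> Pj; have : j \in index_enum I by rewrite mem_index_enum.
elim: (index_enum I) => // i r IH; rewrite inE big_cons => /orP [/eqP <-|jr].
- by rewrite Pj geq_minl.
- case: ifP => _; last exact: IH.
  by rewrite geq_min IH ?orbT.
Qed.

Lemma bigmin_ge (I : finType) (P : pred I) (F : I -> nat) x0 k :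
  k <= x0 -> (forall i, P i -> k <= F i) -> k <= \big[minn/x0]_(i | P i) F i.
Proof.
move=> h0 h; apply: (big_ind (fun y => k <= y)) => // x y hx hy; by rewrite leq_min hx hy.
Qed.

Lemma pm_card (V : finType) (e : rel V) (M : {set {set V}}) : is_pm e M -> #|V| = 2 * #|M|.
Proof.
move=> pm.
have part : partition M [set: V].
{ apply/and3P; split.
  - apply/eqP/setP => x; rewrite inE; have [A HA xA] := pm_cover x pm.
    by apply/bigcupP; exists A.
  - apply/trivIsetP => A B HA HB AB; apply/disjP => x xA xB.
    by move: AB; rewrite (pm_uniq pm HA HB xA xB) eqxx.
  - apply/negP => H0; have [u [v [uv _ E]]] := pm_edge pm H0.
    have : u \in (set0 : {set V}) by rewrite E !inE eqxx.
    by rewrite inE. }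
rewrite -cardsT (card_partition part).
rewrite (eq_bigr (fun _ => 2)); first by rewrite sum_nat_const mulnC.
move=> A HA; have [u [v [uv _ ->]]] := pm_edge pm HA; by rewrite cards2 uv.
Qed.

Lemma forcing_but_one (V : finType) (e : rel V) (M : {set {set V}}) A :
  is_pm e M -> A \in M -> forcing e M (M :\ A).
Proof.
move=> pm HA; apply/andP; split; first exact: subsetDl.
apply/forallP => M'; apply/implyP => /andP [pm' sub].
suff : M \subset M' by move=> h; rewrite (pm_sub_eq pm pm' h).
apply/subsetP => B HB; case: (eqVneq B A) => [->|BA]; last first.
  by apply: (subsetP sub); rewrite !inE BA.
have [u [v [uv euv EA]]] := pm_edge pm HA.
have [B' HB' uB'] := pm_cover u pm'.
have [y Hy] : exists y, B' = [set u; y].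
{ have [p [q [pq _ EB']]] := pm_edge pm' HB'.
  move: uB'; rewrite EB' !inE => /orP [] /eqP ->; first by exists q.
  by exists p; rewrite setUC. }
case: (boolP (B' \in M)) => BM.
- have : B' = A by apply: (pm_uniq (x := u) pm BM HA uB'); rewrite EA !inE eqxx.
  by move=> <-.
- exfalso; have [C HC yC] := pm_cover y pm.
  case: (eqVneq C A) => CA.
  + subst C; have : y \in [set u; v] by rewrite -EA.
    rewrite !inE => /orP [] /eqP E; subst y.
    * by move: HB'; rewrite Hy => /(pm_neq pm'); rewrite eqxx.
    * by move: BM; rewrite Hy -EA HA.
  + have CM' : C \in M' by apply: (subsetP sub); rewrite !inE CA.
    have := pm_uniq (x := y) pm' CM' HB' yC; rewrite Hy !inE eqxx orbT => /(_ isT) E.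
    by move: BM; rewrite Hy -E HC.
Qed.

Lemma fGM_le (V : finType) (e : rel V) (M S : {set {set V}}) : forcing e M S -> fGM e M <= #|S|.
Proof. by move=> h; rewrite /fGM; apply: (bigmin_le (P := fun S => forcing e M S)). Qed.

Lemma fGM_ge (V : finType) (e : rel V) (M : {set {set V}}) k :
  k <= #|M| -> (forall S, forcing e M S -> k <= #|S|) -> k <= fGM e M.
Proof. by move=> h1 h2; rewrite /fGM; apply: bigmin_ge. Qed.

Lemma fmin_le (V : finType) (e : rel V) (M : {set {set V}}) : is_pm e M -> fmin e <= fGM e M.
Proof. by move=> h; rewrite /fmin; apply: (bigmin_le (P := fun M => is_pm e M)). Qed.

Lemma fmin_ge (V : finType) (e : rel V) k :
  k <= #|V| -> (forall M, is_pm e M -> k <= fGM e M) -> k <= fmin e.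
Proof. by move=> h1 h2; rewrite /fmin; apply: bigmin_ge. Qed.

Lemma Fmax_ge (V : finType) (e : rel V) (M : {set {set V}}) : is_pm e M -> fGM e M <= Fmax e.
Proof. by move=> h; rewrite /Fmax; apply: (leq_bigmax_cond (P := fun M => is_pm e M)). Qed.

Lemma Fmax_le (V : finType) (e : rel V) k :
  (forall M, is_pm e M -> fGM e M <= k) -> Fmax e <= k.
Proof. by move=> h; rewrite /Fmax; apply/bigmax_leqP. Qed.

Lemma fGM_le_pm (V : finType) (e : rel V) (M : {set {set V}}) n :
  is_pm e M -> #|V| = 2 * n -> 1 <= n -> fGM e M <= n - 1.
Proof.
move=> pm hV hn; have hM : #|M| = n by have := pm_card pm; rewrite hV; lia.
have /card_gt0P [A HA] : 0 < #|M| by rewrite hM.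
apply: (leq_trans (fGM_le (forcing_but_one pm HA))).
by rewrite (cardsD1 A M) HA in hM; lia.
Qed.

Definition PApair (V : finType) (e : rel V) (A B : {set V}) :=
  exists a b c d, [/\ A = [set a; b], B = [set c; d], e a c & e b d].

Definition PA (V : finType) (e : rel V) (M : {set {set V}}) :=
  forall A B, A \in M -> B \in M -> A != B -> PApair e A B.

Lemma PA_lower (V : finType) (e : rel V) (M S : {set {set V}}) n :
  (forall x y, e x y = e y x) -> is_pm e M -> PA e M -> #|M| = n -> forcing e M S -> n - 1 <= #|S|.
Proof.
move=> sym pm pa hM hf; rewrite leqNgt; apply/negP => hlt.
have SM : S \subset M by case/andP: hf.
have : 1 < #|M :\: S| by rewrite cardsDS // hM; lia.
move=> /card_gt1P [A [B [HA HB AB]]].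
move: HA HB; rewrite !inE => /andP [AS AM] /andP [BS BM].
have [a [b [c [d [EA EB eac ebd]]]]] := pa A B AM BM AB.
subst A B.
apply: (forcing_nf hf).
apply: (alt2 (x1 := a) (x2 := b) (x3 := d) (x4 := c) pm SM) => //.
- by rewrite setUC.
- by rewrite [[set d; c]]setUC.
- by rewrite sym.
- by rewrite setUC.
Qed.

Lemma set2_eq (V : finType) (c d x y : V) :
  x \in [set c; d] -> y \in [set c; d] -> x != y -> [set c; d] = [set x; y].
Proof.
rewrite !inE => /orP [] /eqP -> /orP [] /eqP -> //; rewrite ?eqxx // => _.
exact: setUC.
Qed.

Lemma PApair_sym (V : finType) (e : rel V) A B :
  (forall x y, e x y = e y x) -> PApair e A B -> PApair e B A.
Proof.
move=> sym [a [b [c [d [EA EB eac ebd]]]]].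
by exists c, d, a, b; split => //; rewrite sym.
Qed.

Lemma side_lemma (V : finType) (e : rel V) (M M' : {set {set V}}) A B (u x : V) :
  is_pm e M -> is_pm e M' -> A \in M -> B \in M -> A != B ->
  M :\: [set A; B] \subset M' -> u \in A -> [set u; x] \in M' -> A \in M' \/ x \in B.
Proof.
move=> pm pm' HA HB AB sub uA Hux.
case: (boolP ([set u; x] \in M)) => HM.
- left; have <- : [set u; x] = A by apply: (pm_uniq (x := u) pm HM HA) => //; rewrite !inE eqxx.
  exact Hux.
- have [C HC xC] := pm_cover x pm.
  case: (eqVneq C A) => CA.
  + subst C; exfalso.
    have ux := pm_neq pm' Hux.
    have [p [q [pq _ EA]]] := pm_edge pm HA.
    have : [set u; x] = A.
    { move: uA xC; rewrite EA; move=> h1 h2; rewrite (set2_eq h1 h2 ux) //. }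
    by move=> E; move: HM; rewrite E HA.
  + case: (eqVneq C B) => CB; first by subst C; right.
    exfalso; have CM' : C \in M' by apply: (subsetP sub); rewrite !inE negb_or CA CB HC.
    have E := pm_uniq (x := x) pm' CM' Hux xC (setU1r _ (set11 _)).
    by move: HM; rewrite -E HC.
Qed.

Lemma one_side (V : finType) (e : rel V) (M M' : {set {set V}}) A B :
  (forall x y, e x y = e y x) -> is_pm e M -> is_pm e M' -> A \in M -> B \in M -> A != B ->
  M :\: [set A; B] \subset M' -> ~ PApair e A B -> A \in M'.
Proof.
move=> sym pm pm' HA HB AB sub nPA.
have [a [b [ab _ EA]]] := pm_edge pm HA.
have [x Hx] := pm_partner a pm'. have [y Hy] := pm_partner b pm'.
have aA : a \in A by rewrite EA !inE eqxx.
have bA : b \in A by rewrite EA !inE eqxx orbT.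
case: (side_lemma pm pm' HA HB AB sub aA Hx) => // xB.
case: (side_lemma pm pm' HA HB AB sub bA Hy) => // yB.
exfalso; apply: nPA.
have xy := pinj pm' Hx Hy ab.
have [c [d [cd _ EB]]] := pm_edge pm HB.
rewrite EB in xB yB.
exists a, b, x, y; split => //.
- by rewrite EB; apply: set2_eq.
- exact: pm_adj sym pm' Hx.
- exact: pm_adj sym pm' Hy.
Qed.

Lemma PA_of_fGM (V : finType) (e : rel V) (M : {set {set V}}) n :
  (forall x y, e x y = e y x) -> is_pm e M -> #|M| = n -> n - 1 <= fGM e M -> PA e M.
Proof.
move=> sym pm hM hf A B HA HB AB.
apply: NNPP => nPA.
have nPA' : ~ PApair e B A by move=> h; apply: nPA; apply: PApair_sym.
have sub2 : [set A; B] \subset M by apply/subsetP => C; rewrite !inE => /orP [] /eqP ->.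
have hf2 : forcing e M (M :\: [set A; B]).
{ apply/andP; split; first exact: subsetDl.
  apply/forallP => M'; apply/implyP => /andP [pm' sub].
  have AM' := one_side sym pm pm' HA HB AB sub nPA.
  have BM' : B \in M'.
  { apply: (one_side sym pm pm' HB HA _ _ nPA'); first by rewrite eq_sym.
    by rewrite setUC. }
  suff h : M \subset M' by rewrite (pm_sub_eq pm pm' h).
  apply/subsetP => C HC; case: (boolP (C \in [set A; B])).
  - by rewrite !inE => /orP [] /eqP ->.
  - by move=> h; apply: (subsetP sub); rewrite inE h HC. }
have := fGM_le hf2; rewrite (cardsDS sub2) cards2 AB hM.
have : 1 < #|M| by apply/card_gt1P; exists A, B.
rewrite hM; lia.
Qed.

Lemma card_bigcup_le (I T : finType) (P : pred I) (F : I -> {set T}) :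
  #|\bigcup_(i | P i) F i| <= \sum_(i | P i) #|F i|.
Proof.
apply: (big_ind2 (fun (X : {set T}) k => #|X| <= k)) => //.
- by rewrite cards0.
- move=> X1 k1 X2 k2 h1 h2; apply: leq_trans (leq_add h1 h2).
  exact: (leq_card_setU X1 X2).1.
Qed.

Lemma PA_adj (V : finType) (e : rel V) (M : {set {set V}}) (a b z : V) C :
  PA e M -> [set a; b] \in M -> C \in M -> z \in C -> C != [set a; b] -> e z a || e z b.
Proof.
move=> pa HA HC zC CA.
have [p [q [r [s [EC EA epr eqs]]]]] := pa C _ HC HA CA.
have rA : r \in [set a; b] by rewrite EA !inE eqxx.
have sA : s \in [set a; b] by rewrite EA !inE eqxx orbT.
move: zC; rewrite EC !inE => /orP [] /eqP ->.
- by move: rA; rewrite !inE => /orP [] /eqP E; rewrite -E epr ?orbT.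
- by move: sA; rewrite !inE => /orP [] /eqP E; rewrite -E eqs ?orbT.
Qed.

Lemma main_lower (V : finType) (e : rel V) (M M' S : {set {set V}}) n :
  (forall x y, e x y = e y x) -> is_pm e M -> PA e M -> #|M| = n ->
  is_pm e M' -> forcing e M' S -> n./2 <= #|S|.
Proof.
move=> sym pm pa hM pm' hf; rewrite leqNgt; apply/negP => hlt.
have SM' : S \subset M' by case/andP: hf.
set Mhit := [set A in M | [exists B in S, ~~ [disjoint A & B]]].
have hhit : #|Mhit| <= 2 * #|S|.
{ apply: (leq_trans (n := #|\bigcup_(B in S) [set A in M | ~~ [disjoint A & B]]|)).
  - apply: subset_leq_card; apply/subsetP => A; rewrite inE => /andP [HA /existsP [B /andP [BS dAB]]].
    by apply/bigcupP; exists B => //; rewrite inE HA dAB.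
  - apply: (leq_trans (card_bigcup_le _ _)).
    rewrite mulnC -sum_nat_const; apply: leq_sum => B BS.
    have [u [v [uv _ EB]]] := pm_edge pm' (subsetP SM' _ BS).
    have [Au HAu uAu] := pm_cover u pm. have [Av HAv vAv] := pm_cover v pm.
    apply: (leq_trans (n := #|[set Au; Av]|)); last by rewrite cards2; case: (Au != Av).
    apply: subset_leq_card; apply/subsetP => A; rewrite inE => /andP [HA dAB].
    have [x xA xB] : exists2 x, x \in A & x \in B.
    { apply: NNPP => h; move: dAB => /negP; apply; apply/disjP => x xA xB.
      by apply: h; exists x. }
    move: xB; rewrite EB !inE => /orP [] /eqP E; subst x.
    + by rewrite (pm_uniq pm HA HAu xA uAu) eqxx.
    + by rewrite (pm_uniq pm HA HAv xA vAv) eqxx orbT. }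
have hsub : Mhit \subset M by apply/subsetP => A; rewrite inE => /andP [].
have : 1 < #|M :\: Mhit|.
{ rewrite cardsDS // hM. move: hlt hhit. rewrite -divn2. lia. }
move=> /card_gt1P [A [B [HA HB AB]]].
move: HA HB; rewrite !inE => /andP [nA AM] /andP [nB BM].
have dA : forall C, C \in S -> forall x, x \in A -> x \notin C.
{ move=> C CS x xA; apply/negP => xC; move: nA; rewrite AM /= => /negP; apply.
  apply/existsP; exists C; rewrite CS /=; apply/negP => /disjP /(_ x xA xC) //. }
have dB : forall C, C \in S -> forall x, x \in B -> x \notin C.
{ move=> C CS x xB; apply/negP => xC; move: nB; rewrite BM /= => /negP; apply.
  apply/existsP; exists C; rewrite CS /=; apply/negP => /disjP /(_ x xB xC) //. }
have [a [b [c [d [EA EB eac ebd]]]]] := pa A B AM BM AB.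
subst A B.
have aA : a \in [set a; b] by rewrite !inE eqxx.
have bA : b \in [set a; b] by rewrite !inE eqxx orbT.
have cB : c \in [set c; d] by rewrite !inE eqxx.
have dB' : d \in [set c; d] by rewrite !inE eqxx orbT.
apply: (forcing_nf hf).
apply: (SL (a := a) (b := b) (c := c) (d := d) sym pm' SM').
- by move=> C CS; apply: dA.
- by move=> C CS; apply: dA.
- by move=> C CS; apply: dB.
- by move=> C CS; apply: dB.
- exact: pm_neq pm AM.
- exact: pm_in_neq pm AM BM AB aA cB.
- exact: pm_in_neq pm AM BM AB aA dB'.
- exact: pm_in_neq pm AM BM AB bA cB.
- exact: pm_in_neq pm AM BM AB bA dB'.
- exact: pm_neq pm BM.
- exact: pm_adj sym pm AM.
- exact: pm_adj sym pm BM.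
- exact: eac.
- exact: ebd.
- move=> z za zb zc zd.
  have [C HC zC] := pm_cover z pm.
  apply/andP; split.
  + apply: (PA_adj pa AM HC zC); apply/eqP => E; move: zC; rewrite E !inE.
    by rewrite (negbTE za) (negbTE zb).
  + apply: (PA_adj pa BM HC zC); apply/eqP => E; move: zC; rewrite E !inE.
    by rewrite (negbTE zc) (negbTE zd).
Qed.

Definition pairup (k : nat) := if k %% 2 == 1 then k.-1 else k.+1.
Lemma pairup_spec k : (k %% 2 = 1 /\ pairup k = k - 1) \/ (k %% 2 = 0 /\ pairup k = k + 1).
Proof. rewrite /pairup; case: ifP => /eqP h; lia. Qed.
Lemma pairupK k : pairup (pairup k) = k.
Proof. case: (pairup_spec k) => [[h1 ->]|[h1 ->]].
- case: (pairup_spec (k-1)) => [[h2 ->]|[h2 ->]]; lia.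
- case: (pairup_spec (k+1)) => [[h2 ->]|[h2 ->]]; lia.
Qed.
Definition sx (n m k : nat) := let w := 2 * n - 2 * m - 1 in
  if 2 * m < k then k - (2 * m + 1) else if k < w then k + (2 * m + 1) else w + pairup (k - w).
Lemma sx_spec n m k : let w := 2 * n - 2 * m - 1 in
  (2 * m < k /\ sx n m k = k - (2 * m + 1)) \/ (k <= 2 * m /\ k < w /\ sx n m k = k + (2 * m + 1))
  \/ (k <= 2 * m /\ w <= k /\ sx n m k = w + pairup (k - w)).
Proof. rewrite /sx; repeat case: ifP => ?; lia. Qed.
Lemma sx_inv n m k : n <= 2 * m + 1 -> m < n -> k < 2 * n -> sx n m (sx n m k) = k.
Proof.
move=> h1 h2 h3.
case: (sx_spec n m k) => [[a ->]|[[a [b ->]]|[a [b ->]]]].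
- case: (sx_spec n m (k - (2*m+1))) => [[c ->]|[[c [d ->]]|[c [d ->]]]]; lia.
- case: (sx_spec n m (k + (2*m+1))) => [[c ->]|[[c [d ->]]|[c [d ->]]]]; lia.
- set w := 2 * n - 2 * m - 1.
  have hj : w + pairup (k - w) <= 2 * m.
  { case: (pairup_spec (k - w)) => [[c ->]|[c ->]]; rewrite /w; lia. }
  case: (sx_spec n m (w + pairup (k - w))) => [[x _]|[[x [y _]]|[x [y ->]]]]; try lia.
  by rewrite addKn pairupK; lia.
Qed.
Lemma sx_lt n m k : n <= 2 * m + 1 -> m < n -> k < 2 * n -> sx n m k < 2 * n.
Proof.
move=> h1 h2 h3; case: (sx_spec n m k) => [[a ->]|[[a [b ->]]|[a [b ->]]]]; try lia.
case: (pairup_spec (k - (2 * n - 2 * m - 1))) => [[c ->]|[c ->]]; lia.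
Qed.
Lemma sx_neq n m k : n <= 2 * m + 1 -> m < n -> k < 2 * n -> sx n m k != k.
Proof.
move=> h1 h2 h3; case: (sx_spec n m k) => [[a ->]|[[a [b ->]]|[a [b ->]]]]; try lia.
case: (pairup_spec (k - (2 * n - 2 * m - 1))) => [[c ->]|[c ->]]; lia.
Qed.
Lemma sx_univ n m k : n <= 2 * m + 1 -> m < n -> k < 2 * n -> (k <= 2 * m) || (sx n m k <= 2 * m).
Proof.
move=> h1 h2 h3; case: (sx_spec n m k) => [[a ->]|[[a [b ->]]|[a [b ->]]]]; lia.
Qed.

Lemma pairup_lt N k : ~~ odd N -> k < N -> pairup k < N.
Proof. move=> hN hk; have : N %% 2 = 0 by rewrite modn2; move: hN; case: (odd N).
  move=> hN2; case: (pairup_spec k) => [[c ->]|[c ->]]; lia. Qed.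

Lemma pairup_neq k : pairup k != k.
Proof. case: (pairup_spec k) => [[c ->]|[c ->]]; lia. Qed.

Lemma pairup_div k : pairup k %/ 2 = k %/ 2.
Proof. case: (pairup_spec k) => [[c ->]|[c ->]]; lia. Qed.

Definition ordf N (f : nat -> nat) (i : 'I_N) : 'I_N := insubd i (f i).

Lemma val_ordf N (f : nat -> nat) (i : 'I_N) : f i < N -> val (ordf f i) = f i.
Proof. by move=> h; rewrite /ordf val_insubd h. Qed.

Lemma pm_inv (V : finType) (e : rel V) (s : V -> V) :
  (forall x, s (s x) = x) -> (forall x, s x != x) -> (forall x, e x (s x)) ->
  is_pm e [set [set x; s x] | x : V].
Proof.
move=> sK sn es.
have key : forall x y, x \in [set y; s y] -> [set y; s y] = [set x; s x].
{ move=> x y; rewrite !inE => /orP [] /eqP ->; first by [].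
  by rewrite sK setUC. }
apply/pmP; split.
- move=> A /imsetP [x _ ->]; exists x, (s x); split => //; by rewrite eq_sym sn.
- by move=> x; exists [set x; s x]; [apply/imsetP; exists x | rewrite !inE eqxx].
- move=> x A B /imsetP [y _ ->] /imsetP [z _ ->] h1 h2.
  by rewrite (key _ _ h1) (key _ _ h2).
Qed.

Definition gm (n m : nat) : rel 'I_(2 * n) :=
  fun i j => (i != j) && [|| (i <= 2 * m)%N, (j <= 2 * m)%N | (i %/ 2 == j %/ 2)%N].
Arguments gm : clear implicits.

Lemma gm_simple n m : simple_graph (gm n m).
Proof.
split; first by move=> x; rewrite /gm eqxx.
move=> x y; rewrite /gm eq_sym; congr (_ && _).
by rewrite orbCA [(y %/ 2 == x %/ 2)%N]eq_sym.
Qed.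

Lemma gm_sym n m : forall x y, gm n m x y = gm n m y x.
Proof. by case: (gm_simple n m). Qed.

Lemma gm_univ n m (x u : 'I_(2 * n)) : (u <= 2 * m)%N -> x != u -> gm n m x u.
Proof. by move=> hu xu; rewrite /gm xu hu orbT. Qed.

Definition pr n (i : 'I_(2 * n)) : 'I_(2 * n) := ordf pairup i.
Lemma val_pr n (i : 'I_(2 * n)) : val (pr i) = pairup i.
Proof. by apply: val_ordf; apply: pairup_lt => //; rewrite oddM. Qed.

Definition Mp n : {set {set 'I_(2 * n)}} := [set [set x; pr x] | x : 'I_(2 * n)].

Lemma Mp_pm n m : is_pm (gm n m) (Mp n).
Proof.
apply: pm_inv.
- by move=> x; apply: val_inj; rewrite !val_pr pairupK.
- by move=> x; rewrite -val_eqE val_pr pairup_neq.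
- move=> x; rewrite /gm -val_eqE val_pr eq_sym pairup_neq /=.
  by rewrite val_pr pairup_div eqxx !orbT.
Qed.

Definition sxo n m (i : 'I_(2 * n)) : 'I_(2 * n) := ordf (sx n m) i.
Definition Mx n m : {set {set 'I_(2 * n)}} := [set [set x; sxo m x] | x : 'I_(2 * n)].

Lemma val_sxo n m (i : 'I_(2 * n)) : n <= 2 * m + 1 -> m < n -> val (sxo m i) = sx n m i.
Proof. by move=> h1 h2; apply: val_ordf; apply: sx_lt. Qed.

Lemma Mx_pm n m : n <= 2 * m + 1 -> m < n -> is_pm (gm n m) (Mx n m).
Proof.
move=> h1 h2; apply: pm_inv.
- move=> x; apply: val_inj; rewrite !val_sxo //; exact: sx_inv.
- by move=> x; rewrite -val_eqE val_sxo // sx_neq.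
- move=> x; rewrite /gm -val_eqE val_sxo // eq_sym sx_neq //=.
  by rewrite val_sxo //; case/orP: (sx_univ h1 h2 (ltn_ord x)) => ->; rewrite ?orbT.
Qed.

Lemma cover_card (V : finType) (e : rel V) (M S : {set {set V}}) :
  is_pm e M -> S \subset M -> #|\bigcup_(A in S) A| <= 2 * #|S|.
Proof.
move=> pm SM; apply: (leq_trans (card_bigcup_le _ _)).
rewrite mulnC -sum_nat_const; apply: leq_sum => A AS.
have [u [v [uv _ ->]]] := pm_edge pm (subsetP SM _ AS); by rewrite cards2 uv.
Qed.

Lemma univ_lower n m (M' S : {set {set 'I_(2 * n)}}) :
  1 <= n -> m <= n - 1 -> is_pm (gm n m) M' -> forcing (gm n m) M' S -> m <= #|S|.
Proof.
move=> hn hm pm hf; rewrite leqNgt; apply/negP => hlt.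
have SM' : S \subset M' by case/andP: hf.
have hM' : #|M'| = n.
  have := pm_card pm; rewrite card_ord; set k := #|M'|; clearbody k; lia.
set VS := \bigcup_(A in S) A.
have hVS : #|VS| <= 2 * #|S| := cover_card pm SM'.
set U := [set i : 'I_(2 * n) | (i <= 2 * m)%N].
have le : 2 * m + 1 <= 2 * n by lia.
have hU : 2 * m + 1 <= #|U|.
{ have <- : #|[set widen_ord le k | k : 'I_(2 * m + 1)]| = 2 * m + 1.
  { rewrite card_imset ?cardsT ?card_ord //.
    by move=> a b E; apply: val_inj; move: (congr1 val E). }
  apply: subset_leq_card; apply/subsetP => x /imsetP [k _ ->].
  rewrite inE /=; have := ltn_ord k; lia. }
have : 1 < #|U :\: VS|.
{ rewrite cardsD; have : #|U :&: VS| <= #|VS| by apply: subset_leq_card; apply: subsetIr.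
  lia. }
move=> /card_gt1P [u [u' [hu hu' uu']]].
move: hu hu'; rewrite !inE => /andP [uVS uU] /andP [u'VS u'U].
have hSu : forall A, A \in S -> u \notin A.
{ move=> A AS; apply/negP => uA; move: uVS => /negP; apply; by apply/bigcupP; exists A. }
have hSu' : forall A, A \in S -> u' \notin A.
{ move=> A AS; apply/negP => uA; move: u'VS => /negP; apply; by apply/bigcupP; exists A. }
apply: (forcing_nf hf).
have [pu Hu] := pm_partner u pm.
have sym : forall x y, gm n m x y = gm n m y x by case: (gm_simple n m).
case: (eqVneq pu u') => [E|nE].
- subst pu.
  have : 1 < #|M' :\: S| by rewrite cardsDS // hM'; lia.
  move=> /card_gt1P [F1 [F2 [hF1 hF2 F12]]].
  have [F [hF FU]] : exists F, F \in M' :\: S /\ F != [set u; u'].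
  { case: (eqVneq F1 [set u; u']) => E1; last by exists F1.
    by exists F2; split => //; rewrite -E1 eq_sym. }
  move: hF; rewrite inE => /andP [FS FM].
  have [x [y [xy _ EF]]] := pm_edge pm FM. subst F.
  have xu' : x != u'.
  { by apply: (pm_in_neq pm FM Hu FU); rewrite !inE eqxx ?orbT. }
  have yu : y != u.
  { by apply: (pm_in_neq pm FM Hu FU); rewrite !inE eqxx ?orbT. }
  apply: (alt2 (x1 := u) (x2 := u') (x3 := x) (x4 := y) pm SM') => //.
  + by rewrite eq_sym.
  + by rewrite sym; apply: gm_univ.
  + exact: gm_univ.
  + exact: nS1.
- have [pu' Hu'] := pm_partner u' pm.
  have nE' : pu' != u := pn pm Hu Hu' nE.
  apply: (alt2 (x1 := u) (x2 := pu) (x3 := u') (x4 := pu') pm SM') => //.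
  + by apply: set2_neq1 => //; rewrite eq_sym.
  + exact: gm_univ.
  + exact: gm_univ.
  + exact: nS1.
  + exact: nS1.
Qed.

Lemma set2_vals N (x1 x2 y1 y2 : 'I_N) :
  ((x1 : nat) = y1 /\ (x2 : nat) = y2) \/ ((x1 : nat) = y2 /\ (x2 : nat) = y1) ->
  [set x1; x2] = [set y1; y2].
Proof.
case=> [[h1 h2]|[h1 h2]].
- by rewrite (ord_inj h1) (ord_inj h2).
- by rewrite (ord_inj h1) (ord_inj h2) setUC.
Qed.

Lemma nat_pr n (i : 'I_(2 * n)) : (pr i : nat) = pairup i.
Proof. exact: val_pr. Qed.

Definition mk N (i0 : 'I_N) (j : nat) : 'I_N := insubd i0 j.
Lemma val_mk N (i0 : 'I_N) j : j < N -> (mk i0 j : nat) = j.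
Proof. by move=> h; rewrite /mk val_insubd h. Qed.

Lemma Mp_forcing n m (i0 : 'I_(2 * n)) :
  1 <= n -> m <= n - 1 ->
  forcing (gm n m) (Mp n) [set [set mk i0 (2 * k); mk i0 (2 * k + 1)] | k : 'I_m].
Proof.
move=> hn hm.
set S0 := [set _ | k : 'I_m].
have sym : forall x y, gm n m x y = gm n m y x by case: (gm_simple n m).
have low : forall y : 'I_(2 * n), y < 2 * m -> [set y; pr y] \in S0.
{ move=> y hy; apply/imsetP.
  have hk : y %/ 2 < m by lia.
  exists (Ordinal hk) => //; apply: set2_vals; rewrite nat_pr !val_mk /=; try lia.
  case: (pairup_spec y) => [[c ->]|[c ->]]; lia. }
have S0Mp : S0 \subset Mp n.
{ apply/subsetP => A /imsetP [k _ ->]; apply/imsetP; exists (mk i0 (2 * k)) => //.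
  have := ltn_ord k => hk.
  apply: set2_vals; left; rewrite nat_pr !val_mk; try lia; split => //.
  case: (pairup_spec (2 * k)) => [[c ->]|[c ->]]; lia. }
apply/andP; split => //.
apply/forallP => M; apply/implyP => /andP [pm sub].
have lowM : forall y : 'I_(2 * n), y < 2 * m -> [set y; pr y] \in M.
{ by move=> y hy; apply: (subsetP sub); apply: low. }
have blocked : forall (y v : 'I_(2 * n)), y < 2 * m -> [set y; v] \in M -> v < 2 * m.
{ move=> y v hy H; have E := pm_partner_uniq pm (lowM y hy) H.
  rewrite -E nat_pr; case: (pairup_spec y) => [[c ->]|[c ->]]; lia. }
set h := mk i0 (2 * m). set h' := mk i0 (2 * m + 1).
have vh : (h : nat) = 2 * m by rewrite val_mk //; lia.
have vh' : (h' : nat) = 2 * m + 1 by rewrite val_mk //; lia.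
have hub : [set h'; h] \in M.
{ have [y Hy] := pm_partner h' pm.
  have : gm n m h' y := pm_adj sym pm Hy.
  rewrite /gm => /andP [hy /or3P [c|c|c]]; first by move: c; rewrite vh'; lia.
  - case: (ltnP y (2 * m)) => c2.
    + by have := blocked y h' c2 ltac:(by rewrite setUC); rewrite vh'; lia.
    + have -> : h = y by apply: ord_inj; rewrite vh; lia.
      exact Hy.
  - have -> : h = y.
    { apply: ord_inj; rewrite vh; move: hy; rewrite -val_eqE /= vh' => hy.
      case: (ltnP y (2 * m)) => c2.
      + by have := blocked y h' c2 ltac:(by rewrite setUC); rewrite vh'; lia.
      + move: c; rewrite vh'; lia. }
    exact Hy. }
have all : forall x : 'I_(2 * n), [set x; pr x] \in M.
{ move=> x; case: (ltnP x (2 * m)) => cx; first exact: lowM.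
  have hx := ltn_ord x.
  case: (eqVneq (x %/ 2) m) => cj.
  - have -> : [set x; pr x] = [set h'; h].
      apply: set2_vals; rewrite nat_pr vh vh'.
      case: (pairup_spec x) => [[c ->]|[c ->]]; lia.
    exact hub.
  - set j := x %/ 2.
    have hj : 2 * j + 1 < 2 * n by lia.
    set v := mk i0 (2 * j + 1).
    have vv : (v : nat) = 2 * j + 1 by rewrite val_mk.
    have [y Hy] := pm_partner v pm.
    have : gm n m v y := pm_adj sym pm Hy.
    rewrite /gm => /andP [vy /or3P [c|c|c]]; first by move: c; rewrite vv; lia.
    + exfalso; case: (ltnP y (2 * m)) => c2.
      * by have := blocked y v c2 ltac:(by rewrite setUC); rewrite vv; lia.
      * have E : y = h by apply: ord_inj; rewrite vh; lia.
        subst y.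
        have : v = h' by apply: (pm_partner_uniq pm (x := h)); rewrite setUC.
        by move/(congr1 (@nat_of_ord _)); rewrite vv vh'; lia.
    + have -> : [set x; pr x] = [set v; y].
        apply: set2_vals; rewrite nat_pr vv.
        have vy' : (v : nat) != y by apply/eqP => E; move: vy; rewrite (ord_inj E) eqxx.
        move: vy' c; rewrite vv => vy' c.
        case: (pairup_spec x) => [[c1 ->]|[c1 ->]]; lia.
      exact Hy. }
apply/eqP; apply/esym; apply: pm_sub_eq (Mp_pm n m) pm _.
by apply/subsetP => A /imsetP [x _ ->].
Qed.

Lemma nat_sxo n m (i : 'I_(2 * n)) : n <= 2 * m + 1 -> m < n -> (sxo m i : nat) = sx n m i.
Proof. exact: val_sxo. Qed.

Lemma other (V : finType) (p q u : V) : u \in [set p; q] -> exists o, [set p; q] = [set o; u].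
Proof. by rewrite !inE => /orP [] /eqP ->; [exists q; rewrite setUC | exists p]. Qed.

Lemma PA_univ (V : finType) (e : rel V) (M : {set {set V}}) :
  (forall x y, e x y = e y x) -> is_pm e M ->
  (forall A, A \in M -> exists2 u, u \in A & forall x, x != u -> e x u) -> PA e M.
Proof.
move=> sym pm hu A B HA HB AB.
have [u uA univ] := hu A HA. have [u' uB univ'] := hu B HB.
have [p [q [_ _ EA]]] := pm_edge pm HA. have [p' [q' [_ _ EB]]] := pm_edge pm HB.
rewrite EA in uA. rewrite EB in uB.
have [o Eo] := other uA. have [o' Eo'] := other uB.
rewrite Eo in EA. rewrite Eo' in EB.
have oA : o \in A by rewrite EA !inE eqxx.
have o'B : o' \in B by rewrite EB !inE eqxx.
have uA' : u \in A by rewrite EA !inE eqxx orbT.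
have u'B : u' \in B by rewrite EB !inE eqxx orbT.
exists o, u, u', o'; split => //.
- by rewrite EB setUC.
- by apply: univ'; apply: (pm_in_neq pm HA HB AB).
- by rewrite sym; apply: univ; rewrite eq_sym; apply: (pm_in_neq pm HA HB AB).
Qed.

Lemma part1 n (hn : 1 <= n) (e : rel 'I_(2 * n)) :
  simple_graph e -> has_pm e -> Fmax e = n - 1 -> n./2 <= fmin e <= n - 1.
Proof.
move=> [_ sym] /existsP [M0 pm0] hF.
have hV : #|'I_(2 * n)| = 2 * n by rewrite card_ord.
apply/andP; split; last first.
{ exact: leq_trans (fmin_le pm0) (fGM_le_pm pm0 hV hn). }
have [M [pmM hM]] : exists M, is_pm e M /\ n - 1 <= fGM e M.
{ case: (leqP n 1) => hn1; first by exists M0; split => //; lia.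
  apply: NNPP => H.
  have : Fmax e <= n - 2.
  { apply: Fmax_le => M pmM; rewrite leqNgt; apply/negP => h.
    apply: H; exists M; split => //; lia. }
  have := fGM_le_pm pm0 hV hn.
  have := Fmax_ge pm0.
  rewrite hF; set k := fGM e M0; clearbody k; lia. }
have cM : #|M| = n by have := pm_card pmM; rewrite hV; set k := #|M|; clearbody k; lia.
have paM := PA_of_fGM sym pmM cM hM.
apply: fmin_ge; first by rewrite hV -divn2; lia.
move=> M' pm'; apply: fGM_ge.
- have := pm_card pm'; rewrite hV -divn2; set k := #|M'|; clearbody k; lia.
- by move=> S hf; apply: (main_lower sym pmM paM cM pm' hf).
Qed.

Lemma part2 n m : 1 <= n -> n./2 <= m <= n - 1 ->
  exists e : rel 'I_(2 * n), [/\ simple_graph e, has_pm e, Fmax e = n - 1 & fmin e = m].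
Proof.
move=> hn /andP [hm1 hm2].
have h1 : n <= 2 * m + 1 by move: hm1; rewrite -divn2; lia.
have h2 : m < n by lia.
have hV : #|'I_(2 * n)| = 2 * n by rewrite card_ord.
have i0 : 'I_(2 * n) by exists 0; lia.
have sym : forall x y, gm n m x y = gm n m y x by case: (gm_simple n m).
exists (gm n m); split.
- exact: gm_simple.
- by apply/existsP; exists (Mp n); apply: Mp_pm.
- apply/eqP; rewrite eqn_leq; apply/andP; split.
  + by apply: Fmax_le => M pm; apply: fGM_le_pm pm hV hn.
  + have pmx := Mx_pm h1 h2.
    apply: leq_trans (Fmax_ge pmx).
    have cx : #|Mx n m| = n by have := pm_card pmx; rewrite hV; set k := #|Mx n m|; clearbody k; lia.
    apply: fGM_ge; first by rewrite cx; lia.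
    move=> S hf; apply: (PA_lower sym pmx _ cx hf).
    apply: PA_univ sym pmx _ => A /imsetP [x _ ->].
    case/orP: (sx_univ h1 h2 (ltn_ord x)) => hx.
    * by exists x; [rewrite !inE eqxx | move=> y yx; apply: gm_univ].
    * exists (sxo m x); first by rewrite !inE eqxx orbT.
      move=> y yx; apply: gm_univ; last by []. exact: leq_trans (eq_leq (nat_sxo x h1 h2)) hx.
- apply/eqP; rewrite eqn_leq; apply/andP; split.
  + apply: leq_trans (fmin_le (Mp_pm n m)) _.
    apply: leq_trans (fGM_le (Mp_forcing i0 hn hm2)) _.
    by apply: leq_trans (leq_imset_card _ _) _; rewrite card_ord.
  + apply: fmin_ge; first by rewrite hV; lia.
    move=> M pm; apply: fGM_ge.
    * have := pm_card pm; rewrite hV; set k := #|M|; clearbody k; lia.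
    * by move=> S hf; apply: (univ_lower hn hm2 pm hf).
Qed.


Theorem theorem5p7 (n : nat) (hn : 1 <= n) :
  (forall e : rel 'I_(2 * n),
     simple_graph e -> has_pm e -> Fmax e = n - 1 ->
     n./2 <= fmin e <= n - 1) /\
  (forall m : nat, n./2 <= m <= n - 1 ->
     exists e : rel 'I_(2 * n),
       [/\ simple_graph e, has_pm e, Fmax e = n - 1 & fmin e = m]).
Proof.
split.
- by move=> e; apply: part1.
- by move=> m hm; apply: part2.
Qed.
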